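(* Let $\mathcal{P}=(\mathcal{V},\mathcal{L},\ell_0,\mathcal{T})$ be an integer program and $t_L=(\ell,\varphi,\eta,\ell)\in\mathcal{T}\setminus\mathcal{T}_0$. Let $\mathcal{SB}_L$ be a size bound for a loop $L$ which corresponds to $t_L$ via a variable renaming $\pi$. Then $\pi\circ\mathcal{SB}_L\circ\pi^{-1}$ (i.e., $x\mapsto\pi(\mathcal{SB}_L(\pi^{-1}(x)))$, where $\pi$ applied to a bound renames its variables, and with the value $x$ for variables $x\in\mathcal{V}\setminus\mathcal{V}'$) is a local size bound for $t_L$ w.r.t. $\{t_L\}$.
   Context: Integer program: tuple $(\mathcal{V},\mathcal{L},\ell_0,\mathcal{T})$ with finite variables $\mathcal{V}$, finite locations $\mathcal{L}$, initial location $\ell_0$, finite set $\mathcal{T}$ of transitions $(\ell,\varphi,\eta,\ell')$ with $\ell'\ne\ell_0$, guard $\varphi$ a formula built from inequations $p>0$ ($p\in\mathbb{Q}[\mathcal{V}]$) with $\wedge,\vee$, update $\eta:\mathcal{V}\to\mathbb{Z}[\mathcal{V}]$; $\mathcal{T}_0$ = transitions starting in $\ell_0$. States $\sigma:\mathcal{V}\to\mathbb{Z}$, $|\sigma|(x)=|\sigma(x)|$. $(\ell,\sigma)\to_t(\ell',\sigma')$ for $t=(\ell,\varphi,\eta,\ell')$ if $\sigma(\varphi)$ holds and $\sigma'(v)=\sigma(\eta(v))$ for all $v$; $\to_{\mathcal{T}'}=\bigcup_{t\in\mathcal{T}'}\to_t$, $^*$ reflexive-transitive closure. Entry transitions $\mathcal{E}_{\mathcal{T}'}=\{t=(\_,\_,\_,\ell)\in\mathcal{T}\setminus\mathcal{T}'\mid\exists(\ell,\_,\_,\_)\in\mathcal{T}'\}$.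 Bounds $\mathcal{B}$: smallest set containing $\mathbb{N}\cup\{\omega\}$ and the variables, closed under $+$, $\cdot$, $k^{(\cdot)}$ ($k\in\mathbb{N}$). Local size bound for $t'\in\mathcal{T}'$ w.r.t. $\mathcal{T}'$: $\mathcal{SB}_{t'}:\mathcal{V}\to\mathcal{B}$ with $|\sigma|(\mathcal{SB}_{t'}(x))\ge\sup\{|\sigma'(x)|\mid\exists\ell',(\_,\_,\_,\ell)\in\mathcal{E}_{\mathcal{T}'}.\ (\ell,\sigma)(\to^*_{\mathcal{T}'}\circ\to_{t'})(\ell',\sigma')\}$ for all $x,\sigma$. Loop $L=(\varphi',\eta')$ over $\{x_1,\dots,x_d\}$: guard $\varphi'$ and update $\eta':\{x_1,\dots,x_d\}\to\mathbb{Z}[x_1,\dots,x_d]$; runtime complexity $\mathrm{rc}(\sigma)=\inf\{n\mid\sigma(\eta'^n(\neg\varphi'))\}$ ($\inf\emptyset=\omega$), where $\eta'^n$ is $n$-fold application (substitution); a size bound for $L$ is $\mathcal{SB}_L:\{x_1,\dots,x_d\}\to\mathcal{B}$ with $|\sigma|(\mathcal{SB}_L(x))\ge\sup\{|\sigma(\eta'^n(x))|\mid n\le\mathrm{rc}(\sigma)\}$ for all $x$ and integer states $\sigma$. Correspondence: let $t=(\ell,\varphi,\eta,\ell)$ with $\varphi\in\mathcal{F}(\mathcal{V}')$ for some $\mathcal{V}'\subseteq\mathcal{V}$, $\eta(x)=x$ for $x\in\mathcal{V}\setminus\mathcal{V}'$ and $\eta(x)\in\mathbb{Z}[\mathcal{V}']$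 for $x\in\mathcal{V}'$. A loop $(\varphi',\eta')$ over $\{x_1,\dots,x_d\}$ corresponds to $t$ via the variable renaming (bijection) $\pi:\{x_1,\dots,x_d\}\to\mathcal{V}'$ if $\varphi$ is $\pi(\varphi')$ and $\eta(\pi(x_i))=\pi(\eta'(x_i))$ for all $i$. *)

(* Defs.v *)
From HB Require Import structures.
From mathcomp Require Import all_boot all_order all_algebra.
From mathcomp Require Import mpoly.
Set Implicit Arguments. Unset Strict Implicit. Unset Printing Implicit Defensive.
Import Order.TTheory GRing.Theory Num.Theory.
Local Open Scope ring_scope.

Inductive Fml (n : nat) : Type :=
  | FAtom : {mpoly rat[n]} -> Fml n
  | FAnd : Fml n -> Fml n -> Fml n
  | FOr : Fml n -> Fml n -> Fml n.

Fixpoint fml_holds n (phi : Fml n) (s : 'I_n -> int) : bool :=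
  match phi with
  | FAtom p => 0 < p.@[fun i => (s i)%:~R]
  | FAnd a b => fml_holds a s && fml_holds b s
  | FOr a b => fml_holds a s || fml_holds b s
  end.

Fixpoint fml_subst n k (phi : Fml n) (f : 'I_n -> {mpoly int[k]}) : Fml k :=
  match phi with
  | FAtom p => FAtom (p \mPo [tuple map_mpoly intr (f i) | i < n])
  | FAnd a b => FAnd (fml_subst a f) (fml_subst b f)
  | FOr a b => FOr (fml_subst a f) (fml_subst b f)
  end.

Definition mpoly_rename (R : nzRingType) d n (pi : 'I_d -> 'I_n) (p : {mpoly R[d]})
  : {mpoly R[n]} := p \mPo [tuple 'X_(pi i) | i < d].

Fixpoint fml_rename d n (pi : 'I_d -> 'I_n) (phi : Fml d) : Fml n :=
  match phi with
  | FAtom p => FAtom (mpoly_rename pi p)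
  | FAnd a b => FAnd (fml_rename pi a) (fml_rename pi b)
  | FOr a b => FOr (fml_rename pi a) (fml_rename pi b)
  end.

Inductive Bound (X : Type) : Type :=
  | BNat : nat -> Bound X
  | BOmega : Bound X
  | BVar : X -> Bound X
  | BAdd : Bound X -> Bound X -> Bound X
  | BMul : Bound X -> Bound X -> Bound X
  | BPow : nat -> Bound X -> Bound X.
Arguments BOmega {X}.

Fixpoint bmap X Y (f : X -> Y) (b : Bound X) : Bound Y :=
  match b with
  | BNat k => BNat Y k
  | BOmega => BOmega
  | BVar x => BVar (f x)
  | BAdd a c => BAdd (bmap f a) (bmap f c)
  | BMul a c => BMul (bmap f a) (bmap f c)
  | BPow k a => BPow k (bmap f a)
  end.

(* Extended naturals N u {omega}: None stands for omega. *)
Definition enat := option nat.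
Definition ele (a b : enat) : Prop :=
  match a, b with
  | _, None => True
  | None, Some _ => False
  | Some x, Some y => (x <= y)%N
  end.

(* evaluation of a bound under a valuation of the variables in nat;
   omega is absorbing for every operation *)
Fixpoint beval X (e : X -> nat) (b : Bound X) : enat :=
  match b with
  | BNat k => Some k
  | BOmega => None
  | BVar x => Some (e x)
  | BAdd a c => match beval e a, beval e c with
                | Some u, Some v => Some (u + v)%N | _, _ => None end
  | BMul a c => match beval e a, beval e c with
                | Some u, Some v => Some (u * v)%N | _, _ => None end
  | BPow k a => match beval e a with Some u => Some (k ^ u)%N | None => None end
  end.

Definition absst n (s : 'I_n -> int) : 'I_n -> nat := fun x => `|s x|%N.

(* Integer programs over variables 'I_n with locations in Loc; transitions are
   given by a finite index type TI. *)
Record IntProg (n : nat) (Loc : finType) := {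
  l0 : Loc;
  TI : finType;
  src : TI -> Loc;
  guard : TI -> Fml n;
  upd : TI -> 'I_n -> {mpoly int[n]};
  tgt : TI -> Loc;
  tgt_not_l0 : forall t, tgt t != l0
}.

Section Sem.
Variables (n : nat) (Loc : finType) (P : IntProg n Loc).

Definition step (t : TI P) (l : Loc) (s : 'I_n -> int) (l' : Loc) (s' : 'I_n -> int) : Prop :=
  src t = l /\ tgt t = l' /\ fml_holds (guard t) s /\
  forall v, s' v = (upd t v).@[s].

Inductive star (T' : pred (TI P)) : Loc -> ('I_n -> int) -> Loc -> ('I_n -> int) -> Prop :=
  | star_refl l s : star T' l s l s
  | star_step l s l1 s1 l2 s2 t :
      t \in T' -> step t l s l1 s1 -> star T' l1 s1 l2 s2 -> star T' l s l2 s2.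

Definition entry (T' : pred (TI P)) (e : TI P) : Prop :=
  e \notin T' /\ exists t, t \in T' /\ src t = tgt e.

Definition local_size_bound (T' : pred (TI P)) (t' : TI P) (SB : 'I_n -> Bound 'I_n) : Prop :=
  forall (x : 'I_n) (s : 'I_n -> int) (l l' : Loc) (s' : 'I_n -> int),
    (exists e, entry T' e /\ tgt e = l) ->
    (exists l1 s1, star T' l s l1 s1 /\ step t' l1 s1 l' s') ->
    ele (Some `|s' x|%N) (beval (absst s) (SB x)).

Definition T0 (t : TI P) : bool := src t == l0 P.
End Sem.

Fixpoint eta_pow d (eta : 'I_d -> {mpoly int[d]}) (k : nat) (x : 'I_d) : {mpoly int[d]} :=
  match k with
  | O => 'X_x
  | S k => (eta_pow eta k x) \mPo [tuple eta i | i < d]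
  end.

(* k <= rc(sigma), where rc(sigma) = inf { m | sigma(eta'^m(not phi')) } *)
Definition le_rc d (phi : Fml d) (eta : 'I_d -> {mpoly int[d]}) (s : 'I_d -> int) (k : nat) : Prop :=
  forall m, (m < k)%N -> fml_holds (fml_subst phi (eta_pow eta m)) s.

Definition loop_size_bound d (phi : Fml d) (eta : 'I_d -> {mpoly int[d]})
    (SB : 'I_d -> Bound 'I_d) : Prop :=
  forall (x : 'I_d) (s : 'I_d -> int) (k : nat), le_rc phi eta s k ->
    ele (Some `|(eta_pow eta k x).@[s]|%N) (beval (absst s) (SB x)).

(* Loop (phi', eta') corresponds to transition t = (l, phi, eta, l) via pi:
   pi injective (a bijection onto V' = image of pi), phi = pi(phi'),
   eta(pi x_i) = pi(eta'(x_i)), and eta(x) = x for x outside V'. *)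
Definition corresponds n (Loc : finType) (P : IntProg n Loc) (t : TI P) d
    (phi : Fml d) (eta : 'I_d -> {mpoly int[d]}) (pi : 'I_d -> 'I_n) : Prop :=
  src t = tgt t /\ injective pi /\
  guard t = fml_rename pi phi /\
  (forall i, upd t (pi i) = mpoly_rename pi (eta i)) /\
  (forall x, (forall i, pi i != x) -> upd t x = 'X_x).

Definition transfer_bound d n (pi : 'I_d -> 'I_n) (SB : 'I_d -> Bound 'I_d)
    (x : 'I_n) : Bound 'I_n :=
  match [pick i | pi i == x] with
  | Some i => bmap pi (SB i)
  | None => BVar x
  end.

(* Main.v *)
Require Import Defs.
From HB Require Import structures.
From mathcomp Require Import all_boot all_order all_algebra.
From mathcomp Require Import mpoly.
From Stdlib Require Import FunctionalExtensionality.
Import GRing.Theory Num.Theory.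

Section Aux.
Local Open Scope ring_scope.

Lemma meval_map_intr k (q : {mpoly int[k]}) (u : 'I_k -> int) :
  (map_mpoly intr q : {mpoly rat[k]}).@[fun i => (u i)%:~R] = (q.@[u])%:~R.
Proof.
rewrite !mevalE (perm_big _ (msupp_map_mpoly _ (@intr_inj rat))).
rewrite rmorph_sum /=; apply: eq_bigr => m _.
rewrite mcoeff_map_mpoly rmorphM rmorph_prod /=; congr (_ * _).
by apply: eq_bigr => i _; rewrite rmorphXn.
Qed.

Lemma fml_rename_holds d n (pi : 'I_d -> 'I_n) (phi : Fml d) (s : 'I_n -> int) :
  fml_holds (fml_rename pi phi) s = fml_holds phi (fun i => s (pi i)).
Proof.
elim: phi => [p|a IHa b IHb|a IHa b IHb] /=; last 2 first.
- by rewrite IHa IHb.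
- by rewrite IHa IHb.
rewrite /mpoly_rename comp_mpoly_meval; congr (0 < _).
by apply: meval_eq => i; rewrite tnth_mktuple mevalXU.
Qed.

Lemma fml_subst_holds d k (phi : Fml d) (f : 'I_d -> {mpoly int[k]}) (s : 'I_k -> int) :
  fml_holds (fml_subst phi f) s = fml_holds phi (fun i => (f i).@[s]).
Proof.
elim: phi => [p|a IHa b IHb|a IHa b IHb] /=; last 2 first.
- by rewrite IHa IHb.
- by rewrite IHa IHb.
rewrite comp_mpoly_meval; congr (0 < _).
by apply: meval_eq => i; rewrite tnth_mktuple meval_map_intr.
Qed.

Definition Fst {d} (eta : 'I_d -> {mpoly int[d]}) (u : 'I_d -> int) : 'I_d -> int :=
  fun i => (eta i).@[u].

Lemma eta_pow_eval d (eta : 'I_d -> {mpoly int[d]}) k :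
  forall u x, (eta_pow eta k x).@[u] = iter k (Fst eta) u x.
Proof.
elim: k => [|k IH] u x /=; first by rewrite mevalXU.
rewrite comp_mpoly_meval.
have -> : (fun i => (tnth [tuple eta i | i < d] i).@[u]) = Fst eta u.
  by apply: functional_extensionality => i; rewrite tnth_mktuple.
by rewrite IH -iterSr.
Qed.

Lemma beval_bmap X Y (f : X -> Y) (e : Y -> nat) (b : Bound X) :
  beval e (bmap f b) = beval (fun x => e (f x)) b.
Proof.
by elim: b => //= [a IHa c IHc|a IHa c IHc|k a IHa]; rewrite ?IHa ?IHc.
Qed.

Lemma step_corr n (Loc : finType) (P : IntProg n Loc) (tL : TI P)
    d (phi : Fml d) (eta : 'I_d -> {mpoly int[d]}) (pi : 'I_d -> 'I_n)
    l s l1 s1 :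
  corresponds tL phi eta pi -> step tL l s l1 s1 ->
  [/\ fml_holds phi (fun i => s (pi i)),
      (fun i => s1 (pi i)) = Fst eta (fun i => s (pi i)) &
      forall x, (forall i, pi i != x) -> s1 x = s x].
Proof.
move=> [_ [_ [Hg [Hu Ho]]]] [_ [_ [Hgd Hs]]]; split.
- by rewrite -fml_rename_holds -Hg.
- apply: functional_extensionality => i.
  rewrite Hs Hu /mpoly_rename comp_mpoly_meval /Fst.
  by apply: meval_eq => j; rewrite tnth_mktuple mevalXU.
- by move=> x Hx; rewrite Hs Ho // mevalXU.
Qed.


Lemma star_corr n (Loc : finType) (P : IntProg n Loc) (tL : TI P)
    d (phi : Fml d) (eta : 'I_d -> {mpoly int[d]}) (pi : 'I_d -> 'I_n)
    l s l2 s2 :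
  corresponds tL phi eta pi -> star (pred1 tL) l s l2 s2 ->
  exists k, [/\ forall m, (m < k)%N -> fml_holds phi (iter m (Fst eta) (fun i => s (pi i))),
      (fun i => s2 (pi i)) = iter k (Fst eta) (fun i => s (pi i)) &
      forall x, (forall i, pi i != x) -> s2 x = s x].
Proof.
move=> Hc; elim => {l s l2 s2} [l s|l s l1 s1 l2 s2 t Ht Hst _ [k [H1 H2 H3]]].
  by exists 0%N; split.
move: Ht; rewrite inE => /eqP Ht; subst t.
have [G1 G2 G3] := @step_corr _ _ _ _ _ _ _ _ _ _ _ _ Hc Hst.
exists k.+1; split.
- case=> [|m] Hm; first exact: G1.
  by rewrite iterSr -G2; apply: H1.
- by rewrite H2 G2 -iterSr.
- by move=> x Hx; rewrite H3 // G3.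
Qed.

End Aux.
Arguments step_corr {n Loc P tL d phi eta pi l s l1 s1}.
Arguments star_corr {n Loc P tL d phi eta pi l s l2 s2}.

Theorem lemma35 (n : nat) (Loc : finType) (P : IntProg n Loc) (tL : TI P)
    (d : nat) (phi : Fml d) (eta : 'I_d -> {mpoly int[d]}) (pi : 'I_d -> 'I_n)
    (SBL : 'I_d -> Bound 'I_d) :
  ~~ T0 tL ->
  corresponds tL phi eta pi ->
  loop_size_bound phi eta SBL ->
  local_size_bound (pred1 tL) tL (transfer_bound pi SBL).
Proof.
move=> _ Hc HL x s l l' s' _ [l1 [s1 [Hstar Hstep]]].
have [k [H1 H2 H3]] := star_corr Hc Hstar.
have [G1 G2 G3] := step_corr Hc Hstep.
rewrite /transfer_bound; case: pickP => [i /eqP Hi | Hn].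
- subst x; rewrite beval_bmap.
  have Hrc : le_rc phi eta (fun j => s (pi j)) k.+1.
    move=> m Hm; rewrite fml_subst_holds.
    have -> : (fun i0 => (eta_pow eta m i0).@[fun j => s (pi j)])
              = iter m (Fst eta) (fun j => s (pi j)).
      by apply: functional_extensionality => y; rewrite eta_pow_eval.
    rewrite ltnS leq_eqVlt in Hm; case/orP: Hm => [/eqP ->|Hm]; last exact: H1.
    by rewrite -H2.
  have := HL i _ _ Hrc; rewrite eta_pow_eval /=.
  have -> : s' (pi i) = iter k.+1 (Fst eta) (fun j => s (pi j)) i.
    by rewrite /= -H2 -G2.
  by [].
- have Hx : forall i, pi i != x by move=> i; apply/negbT; exact: Hn i.
  rewrite /= G3 // H3 //.
Qed.
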